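(* Let $\mathcal{X}$ be a Banach space with an unconditional basis $\mathcal{E}=\{e_n\}_{n\ge1}$, ordered by $\mathcal{E}$, and let $T$ be a positive operator whose matrix $A=(a_{n,m})_{n,m\in\mathbb{N}}$ with respect to $\mathcal{E}$ is tridiagonal. Then $T$ has no non-trivial closed invariant ideals if and only if $a_{n+1,n}\neq0$ and $a_{n,n+1}\ne0$ for every $n\in\mathbb{N}$.
   Context: The matrix of $T$ is given by $Te_m=\sum_n a_{n,m}e_n$; $T$ positive means $a_{n,m}\ge0$ for all $n,m$. Tridiagonal means $a_{n,m}=0$ whenever $|n-m|>1$. An ideal is a linear subspace $M$ such that $|x|\le|y|$ coordinatewise and $y\in M$ imply $x\in M$, where $|x|=\sum_n|x_n|e_n$. Non-trivial means different from $\{0\}$ and $\mathcal{X}$. *)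

(* Defs.v *)
From HB Require Import structures.
From mathcomp Require Import all_boot all_order all_algebra.
From mathcomp Require Import all_classical all_reals all_analysis.
Set Implicit Arguments. Unset Strict Implicit. Unset Printing Implicit Defensive.
Import Order.TTheory GRing.Theory Num.Theory.
Import numFieldNormedType.Exports.
Local Open Scope classical_set_scope.
Local Open Scope ring_scope.

Section Defs.
Context {R : realType} {X : normedModType R}.

Definition unc_expansion (e : nat -> X) (c : nat -> R) (x : X) : Prop :=
  forall eps : R, 0 < eps -> exists s0 : seq nat,
    forall s : seq nat, uniq s -> {subset s0 <= s} ->
      `| x - \sum_(n <- s) c n *: e n | < eps.

Definition unconditional_basis (e : nat -> X) : Prop :=
  forall x : X, exists! c : nat -> R, unc_expansion e c x.

(* Ideal w.r.t. the coordinatewise order induced by the basis e: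
   a linear subspace M such that |x| <= |y| coordinatewise and y in M
   imply x in M. *)
Definition is_ideal (e : nat -> X) (M : set X) : Prop :=
  [/\ M 0,
      (forall x y, M x -> M y -> M (x + y)),
      (forall (k : R) x, M x -> M (k *: x)) &
      (forall x y (c d : nat -> R), unc_expansion e c x -> unc_expansion e d y ->
         (forall n, `|c n| <= `|d n|) -> M y -> M x)].

End Defs.

(* Main.v *)
Require Import Defs.
From HB Require Import structures.
From mathcomp Require Import all_boot all_order all_algebra.
From mathcomp Require Import all_classical all_reals all_analysis.
From mathcomp Require Import ring lra.
Import Order.TTheory GRing.Theory Num.Theory.
Import numFieldNormedType.Exports.
Local Open Scope classical_set_scope.
Local Open Scope ring_scope.
Set Implicit Arguments. Unset Strict Implicit. Unset Printing Implicit Defensive.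
Lemma exp_add (R : realType) (X : normedModType R) (e : nat -> X) c d x y :
  unc_expansion e c x -> unc_expansion e d y ->
  unc_expansion e (fun n => c n + d n) (x + y).
Proof.
move=> hc hd eps eps0.
have e2 : 0 < eps / 2 by rewrite divr_gt0.
have [s1 H1] := hc _ e2; have [s2 H2] := hd _ e2.
exists (s1 ++ s2) => s us sub.
have S1 : {subset s1 <= s} by move=> z zs; apply: sub; rewrite mem_cat zs.
have S2 : {subset s2 <= s} by move=> z zs; apply: sub; rewrite mem_cat zs orbT.
have := H1 s us S1; have := H2 s us S2.
move=> h2 h1.
have -> : \sum_(n <- s) (c n + d n) *: e n = \sum_(n <- s) c n *: e n + \sum_(n <- s) d n *: e n.
  by rewrite -big_split; apply: eq_bigr => i _; rewrite scalerDl.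
rewrite (_ : _ - _ = (x - \sum_(n <- s) c n *: e n) + (y - \sum_(n <- s) d n *: e n)); last first.
  by rewrite opprD addrACA.
apply: (le_lt_trans (ler_normD _ _)).
by rewrite (splitr eps) ltrD.
Qed.

Lemma exp_scale (R : realType) (X : normedModType R) (e : nat -> X) c x (k : R) :
  unc_expansion e c x -> unc_expansion e (fun n => k * c n) (k *: x).
Proof.
move=> hc eps eps0.
have e2 : 0 < eps / (`|k| + 1) by rewrite divr_gt0 // ltr_wpDl.
have [s1 H1] := hc _ e2.
exists s1 => s us sub.
have := H1 s us sub.
rewrite (_ : k *: x - _ = k *: (x - \sum_(n <- s) c n *: e n)); last first.
  by rewrite scalerBr scaler_sumr (eq_bigr _ (fun i _ => scalerA _ _ _)).
rewrite normrZ => h.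
have k1 : 0 < `|k| + 1 by rewrite ltr_wpDl.
apply: (le_lt_trans (y := (`|k| + 1) * `|x - \sum_(n <- s) c n *: e n|)).
  by rewrite ler_wpM2r // lerDl.
by rewrite -ltr_pdivlMl // mulrC.
Qed.

Lemma sum_delta (R : realType) (X : normedModType R) (e : nat -> X) (s : seq nat) k :
  uniq s -> k \in s -> \sum_(n <- s) (n == k)%:R *: e n = e k.
Proof.
move=> us ks; rewrite (bigD1_seq k) //= eqxx scale1r big1 ?addr0 //.
by move=> i /negbTE ->; rewrite scale0r.
Qed.

Lemma exp_delta (R : realType) (X : normedModType R) (e : nat -> X) k :
  unc_expansion e (fun n => (n == k)%:R) (e k).
Proof.
move=> eps eps0; exists [:: k] => s us sub.
by rewrite sum_delta ?subrr ?normr0 // sub // mem_seq1.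
Qed.

Lemma exp_zero (R : realType) (X : normedModType R) (e : nat -> X) :
  unc_expansion e (fun n => 0) 0.
Proof.
move=> eps eps0; exists [::] => s us sub.
by rewrite big1 ?subrr ?normr0 // => i _; rewrite scale0r.
Qed.

Lemma exp_inj (R : realType) (X : normedModType R) (e : nat -> X) c x y :
  unc_expansion e c x -> unc_expansion e c y -> x = y.
Proof.
move=> hx hy; apply/eqP; rewrite -subr_eq0 -normr_le0.
apply/ler_addgt0Pr => eps eps0; rewrite add0r.
have e2 : 0 < eps / 2 by rewrite divr_gt0.
have [s1 H1] := hx _ e2; have [s2 H2] := hy _ e2.
set s := undup (s1 ++ s2).
have us : uniq s by exact: undup_uniq.
have S1 : {subset s1 <= s} by move=> z zs; rewrite mem_undup mem_cat zs.
have S2 : {subset s2 <= s} by move=> z zs; rewrite mem_undup mem_cat zs orbT.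
have := H1 s us S1; have := H2 s us S2 => h2 h1.
rewrite (_ : x - y = (x - \sum_(n <- s) c n *: e n) - (y - \sum_(n <- s) c n *: e n)); last first.
  by rewrite opprB addrA subrK.
apply: ltW; apply: (le_lt_trans (ler_normB _ _)).
by rewrite (splitr eps) ltrD.
Qed.
Definition coef (R : realType) (X : normedModType R) (e : nat -> X)
  (hB : unconditional_basis e) (x : X) : nat -> R := sval (cid (hB x)).


Lemma coefP (R : realType) (X : normedModType R) (e : nat -> X)
  (hB : unconditional_basis e) x : unc_expansion e (coef hB x) x.
Proof. exact: (proj1 (svalP (cid (hB x)))). Qed.

Lemma coefE (R : realType) (X : normedModType R) (e : nat -> X)
  (hB : unconditional_basis e) x c : unc_expansion e c x -> coef hB x = c.
Proof. exact: (proj2 (svalP (cid (hB x)))). Qed.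

Lemma coef0 (R : realType) (X : normedModType R) (e : nat -> X)
  (hB : unconditional_basis e) n : coef hB 0 n = 0.
Proof. by rewrite (coefE hB (exp_zero e)). Qed.

Lemma coefD (R : realType) (X : normedModType R) (e : nat -> X)
  (hB : unconditional_basis e) x y n : coef hB (x + y) n = coef hB x n + coef hB y n.
Proof. by rewrite (coefE hB (exp_add (coefP hB x) (coefP hB y))). Qed.

Lemma coefZ (R : realType) (X : normedModType R) (e : nat -> X)
  (hB : unconditional_basis e) (k : R) x n : coef hB (k *: x) n = k * coef hB x n.
Proof. by rewrite (coefE hB (exp_scale k (coefP hB x))). Qed.

Lemma coefN (R : realType) (X : normedModType R) (e : nat -> X)
  (hB : unconditional_basis e) x n : coef hB (- x) n = - coef hB x n.
Proof. by rewrite -scaleN1r coefZ mulN1r. Qed.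

Lemma coefB (R : realType) (X : normedModType R) (e : nat -> X)
  (hB : unconditional_basis e) x y n : coef hB (x - y) n = coef hB x n - coef hB y n.
Proof. by rewrite coefD coefN. Qed.

Lemma coef_e (R : realType) (X : normedModType R) (e : nat -> X)
  (hB : unconditional_basis e) k n : coef hB (e k) n = (n == k)%:R.
Proof. by rewrite (coefE hB (exp_delta e k)). Qed.

Lemma coef_sum (R : realType) (X : normedModType R) (e : nat -> X)
  (hB : unconditional_basis e) (I : Type) (s : seq I) (v : I -> X) n :
  coef hB (\sum_(i <- s) v i) n = \sum_(i <- s) coef hB (v i) n.
Proof.
elim: s => [|i s IH]; first by rewrite !big_nil coef0.
by rewrite !big_cons coefD IH.
Qed.

Lemma coef_inj (R : realType) (X : normedModType R) (e : nat -> X)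
  (hB : unconditional_basis e) x y : (forall n, coef hB x n = coef hB y n) -> x = y.
Proof.
move=> h; apply: (exp_inj (coefP hB x)).
have -> : coef hB x = coef hB y by apply: funext.
exact: coefP.
Qed.

Lemma e_neq0 (R : realType) (X : normedModType R) (e : nat -> X)
  (hB : unconditional_basis e) k : e k != 0.
Proof.
apply/eqP => ek.
have := coef_e hB k k; rewrite ek coef0 eqxx => /eqP.
by rewrite eq_sym oner_eq0.
Qed.

Lemma coef_psum (R : realType) (X : normedModType R) (e : nat -> X)
  (hB : unconditional_basis e) (s : seq nat) (c : nat -> R) n :
  uniq s -> coef hB (\sum_(k <- s) c k *: e k) n = if n \in s then c n else 0.
Proof.
move=> us; rewrite coef_sum.
under eq_bigr do rewrite coefZ coef_e.
case: ifP => ns.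
  rewrite (bigD1_seq n) //= eqxx mulr1 big1 ?addr0 //.
  by move=> i; rewrite eq_sym => /negbTE ->; rewrite mulr0.
rewrite big1_seq // => i /andP[_ iS]; case: eqP => [ni|]; last by rewrite mulr0.
by rewrite ni iS in ns.
Qed.
Definition psum (R : realType) (X : normedModType R) (e : nat -> X)
  (hB : unconditional_basis e) (s : seq nat) (x : X) : X :=
  \sum_(n <- s) coef hB x n *: e n.

Definition bnd (R : realType) (X : normedModType R) (e : nat -> X)
  (hB : unconditional_basis e) (x : X) (b : R) : Prop :=
  forall s, uniq s -> `|psum hB s x| <= b.

Lemma psumD (R : realType) (X : normedModType R) (e : nat -> X)
  (hB : unconditional_basis e) s x y : psum hB s (x + y) = psum hB s x + psum hB s y.
Proof. by rewrite /psum -big_split; apply: eq_bigr => i _; rewrite coefD scalerDl. Qed.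

Lemma psumZ (R : realType) (X : normedModType R) (e : nat -> X)
  (hB : unconditional_basis e) s k x : psum hB s (k *: x) = k *: psum hB s x.
Proof. by rewrite /psum scaler_sumr; apply: eq_bigr => i _; rewrite coefZ scalerA. Qed.

Lemma psumB (R : realType) (X : normedModType R) (e : nat -> X)
  (hB : unconditional_basis e) s x y : psum hB s (x - y) = psum hB s x - psum hB s y.
Proof. by rewrite psumD -scaleN1r psumZ scaleN1r. Qed.

Lemma psum0 (R : realType) (X : normedModType R) (e : nat -> X)
  (hB : unconditional_basis e) s : psum hB s 0 = 0.
Proof. by rewrite /psum big1 // => i _; rewrite coef0 scale0r. Qed.

Lemma bnd_le (R : realType) (X : normedModType R) (e : nat -> X)
  (hB : unconditional_basis e) x a b : bnd hB x a -> a <= b -> bnd hB x b.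
Proof. by move=> h ab s us; apply: le_trans (h s us) ab. Qed.

Lemma bnd0 (R : realType) (X : normedModType R) (e : nat -> X)
  (hB : unconditional_basis e) : bnd hB 0 0.
Proof. by move=> s us; rewrite psum0 normr0. Qed.

Lemma bndD (R : realType) (X : normedModType R) (e : nat -> X)
  (hB : unconditional_basis e) x y a b : bnd hB x a -> bnd hB y b -> bnd hB (x + y) (a + b).
Proof.
move=> hx hy s us; rewrite psumD; apply: le_trans (ler_normD _ _) _.
exact: lerD (hx s us) (hy s us).
Qed.

Lemma bndZ (R : realType) (X : normedModType R) (e : nat -> X)
  (hB : unconditional_basis e) x k a : bnd hB x a -> bnd hB (k *: x) (`|k| * a).
Proof.
by move=> hx s us; rewrite psumZ normrZ; apply: ler_wpM2l => //; exact: hx.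
Qed.

Lemma bndB (R : realType) (X : normedModType R) (e : nat -> X)
  (hB : unconditional_basis e) x y a b : bnd hB x a -> bnd hB y b -> bnd hB (x - y) (a + b).
Proof.
move=> hx hy; apply: bndD => //.
rewrite -scaleN1r; apply: bnd_le (bndZ (-1) hy) _.
by rewrite normrN normr1 mul1r.
Qed.

Lemma bnd_coef (R : realType) (X : normedModType R) (e : nat -> X)
  (hB : unconditional_basis e) x b k : bnd hB x b -> `|coef hB x k| * `|e k| <= b.
Proof.
by move=> /(_ [:: k] erefl); rewrite /psum big_seq1 normrZ.
Qed.

Lemma bnd_exists (R : realType) (X : normedModType R) (e : nat -> X)
  (hB : unconditional_basis e) x : exists b, bnd hB x b.
Proof.
have [s0 H0] := coefP hB x ltr01.
set t0 := undup s0.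
exists (`|x| + 1 + \sum_(n <- t0) `|coef hB x n| * `|e n|) => s us.
set f := [seq n <- t0 | n \notin s].
have uf : uniq f by apply: filter_uniq; exact: undup_uniq.
have ut : uniq (s ++ f).
  rewrite cat_uniq us uf andbT /=; apply/hasPn => n.
  by rewrite mem_filter => /andP[].
have sub : {subset s0 <= s ++ f}.
  move=> n ns0; rewrite mem_cat; case: (boolP (n \in s)) => //= ns.
  by rewrite mem_filter ns mem_undup.
have := H0 _ ut sub.
rewrite big_cat /= -/(psum hB s x) -/(psum hB f x) => h.
have e1 : psum hB s x = (psum hB s x + psum hB f x) - psum hB f x by rewrite addrK.
rewrite e1; apply: le_trans (ler_normB _ _) _.
apply: lerD.
  have -> : psum hB s x + psum hB f x = x - (x - (psum hB s x + psum hB f x)) by rewrite subKr.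
  apply: le_trans (ler_normB _ _) _; rewrite lerD2l; exact: ltW.
apply: le_trans (ler_norm_sum _ _ _) _.
rewrite /f big_filter.
under eq_bigr do rewrite normrZ.
rewrite [leLHS]big_mkcond /=; apply: ler_sum => n _.
by case: ifP => // _; rewrite mulr_ge0.
Qed.
Lemma baire_ball (R : realType) (X : completeNormedModType R) (e : nat -> X)
  (hB : unconditional_basis e) :
  exists (j : nat) (x0 : X) (r : R), 0 < r /\
    (forall z, `|x0 - z| < r -> closure [set x | bnd hB x j%:R] z).
Proof.
apply: contrapT => H.
pose F := fun j : nat => ~` closure [set x | bnd hB x j%:R].
have oF : forall j, open (F j) /\ dense (F j).
  move=> j; split; first by rewrite openC; exact: closed_closure.
  move=> O [y Oy] oO; apply: contrapT => hno; apply: H.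
  have : nbhs y O by apply: open_nbhs_nbhs; split.
  move=> /nbhs_ballP[r r0 hr].
  exists j, y, r; split => // z yz.
  apply: contrapT => nz; apply: hno; exists z; split => //.
  by apply: hr; rewrite -ball_normE /ball_.
have := Baire oF (O := setT).
case.
- by exists 0.
- exact: openT.
move=> z [_ hz].
have [b hb] := bnd_exists hB z.
have bb := archi_boundP (normr_ge0 b).
apply: (hz (Num.Def.archi_bound `|b|)) => //.
apply: subset_closure => /=.
apply: bnd_le hb _; apply: ltW; apply: le_lt_trans bb; exact: ler_norm.
Qed.
Lemma approx (R : realType) (X : completeNormedModType R) (e : nat -> X)
  (hB : unconditional_basis e) :
  exists K : R, 0 < K /\ forall y (eps : R), 0 < eps ->
    exists z, bnd hB z (K * `|y|) /\ `|y - z| < eps.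
Proof.
have [j [x0 [r [r0 hcl]]]] := baire_ball hB.
have j0 : 0 <= (j%:R : R) by [].
exists (4 * (j%:R + 1) / r); split.
  by apply: divr_gt0 => //; lra.
move=> y eps eps0.
have [->|y0] := eqVneq y 0.
  by exists 0; rewrite subrr normr0 mulr0; split => //; exact: bnd0.
have ny : 0 < `|y| by rewrite normr_gt0.
set t := r / (2 * `|y|).
have t0 : 0 < t by rewrite divr_gt0 // mulr_gt0.
have d0 : 0 < eps * t / 2 by rewrite divr_gt0 // mulr_gt0.
have nty : `|t *: y| = r / 2.
  rewrite normrZ gtr0_norm // /t; field; exact: lt0r_neq0.
have c1 : closure [set x | bnd hB x j%:R] (x0 + t *: y).
  by apply: hcl; rewrite opprD addNKr normrN nty; lra.
have c2 : closure [set x | bnd hB x j%:R] x0.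
  by apply: hcl; rewrite subrr normr0.
have [u [Bu bu]] := c1 _ (nbhsx_ballx _ _ d0).
have [v [Bv bv]] := c2 _ (nbhsx_ballx _ _ d0).
move: bu bv; rewrite -ball_normE /ball_ => bu bv.
exists (t^-1 *: (u - v)); split.
  apply: bnd_le (bndZ t^-1 (bndB Bu Bv)) _.
  rewrite gtr0_norm ?invr_gt0 // /t invf_div -subr_ge0.
  have -> : 4 * (j%:R + 1) / r * `|y| - 2 * `|y| / r * (j%:R + j%:R) = 4 * `|y| / r.
    by field; exact: lt0r_neq0.
  by apply: divr_ge0; [apply: mulr_ge0 | apply: ltW].
have E : x0 + t *: y - u - (x0 - v) = t *: y - (u - v).
  by rewrite [x0 + _]addrC addrAC addrKA opprK opprB addrA addrAC.
have -> : y - t^-1 *: (u - v) = t^-1 *: (x0 + t *: y - u - (x0 - v)).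
  by rewrite E [RHS]scalerBr scalerA mulVf ?gt_eqF // scale1r.
rewrite normrZ gtr0_norm ?invr_gt0 //.
rewrite -ltr_pdivlMl ?invr_gt0 // invrK.
apply: le_lt_trans (ler_normB _ _) _.
have -> : t * eps = eps * t / 2 + eps * t / 2 by field.
exact: ltrD.
Qed.
Definition pw (R : realType) (m : nat) : R := (2^-1) ^+ m.

Lemma pw_gt0 (R : realType) m : 0 < pw R m.
Proof. by rewrite /pw exprn_gt0 // invr_gt0. Qed.

Lemma pwS (R : realType) m : pw R m.+1 = pw R m / 2.
Proof. by rewrite /pw exprSr. Qed.

Lemma pw0 (R : realType) : pw R 0 = 1.
Proof. by rewrite /pw expr0. Qed.

Lemma pwD (R : realType) m k : pw R (m + k) = pw R m * pw R k.
Proof. by rewrite /pw exprD. Qed.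

Lemma pw_inv (R : realType) m : pw R m = ((2 ^ m)%:R)^-1.
Proof. by rewrite /pw exprVn natrX. Qed.

Lemma pw_size (R : realType) k : k%:R * pw R k <= 1.
Proof.
rewrite pw_inv ler_pdivrMr ?mul1r ?ltr0n ?expn_gt0 // ler_nat.
exact: ltnW (ltn_expl _ (isT : (1 < 2)%N)).
Qed.

Lemma pw_small (R : realType) (d : R) : 0 < d -> exists m, pw R m < d.
Proof.
move=> d0; have di : 0 < d^-1 by rewrite invr_gt0.
have hb := archi_boundP (ltW di).
set m := Num.Def.archi_bound d^-1 in hb.
exists m; rewrite pw_inv -[d]invrK ltf_pV2 ?posrE ?invr_gt0 ?ltr0n ?expn_gt0 //.
apply: lt_le_trans hb _; rewrite ler_nat.
exact: ltnW (ltn_expl _ (isT : (1 < 2)%N)).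
Qed.

Lemma pw_le (R : realType) l m : (l <= m)%N -> pw R m <= pw R l.
Proof.
move=> lm; rewrite -(subnKC lm) pwD; apply: ler_piMr; first exact: ltW (pw_gt0 _ _).
apply: exprn_ile1; rewrite ?invr_ge0 ?invf_le1 //; lra.
Qed.

Lemma real_limit (R : realType) (u b : nat -> R) :
  (forall l m, (l <= m)%N -> `|u m - u l| <= b l) ->
  (forall l m, (l <= m)%N -> b m <= b l) ->
  exists d, forall m, `|u m - d| <= b m.
Proof.
move=> hu hb.
have b0 : forall m, 0 <= b m by move=> m; apply: le_trans (hu m m (leqnn m)); rewrite normr_ge0.
pose E := [set u m - b m | m in setT].
have ub : ubound E (u 0%N + b 0%N).
  move=> _ [m _ <-].
  have := hu 0%N m (leq0n m); rewrite ler_norml => /andP[_ h].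
  have := b0 m; lra.
have hE : has_ubound E by exists (u 0%N + b 0%N).
exists (sup E) => m; rewrite ler_norml; apply/andP; split.
  have : sup E <= u m + b m.
    apply: ge_sup; first by exists (u 0%N - b 0%N), 0%N.
    move=> _ [l _ <-]; case: (leqP l m) => lm.
      have := hu l m lm; rewrite ler_norml => /andP[h _].
      have := b0 m; lra.
    have := hu m l (ltnW lm); rewrite ler_norml => /andP[_ h].
    have := b0 l; lra.
  lra.
have : u m - b m <= sup E by apply: ub_le_sup => //; exists m.
lra.
Qed.
Lemma sum_const_seq (R : realType) (I : Type) (s : seq I) (c : R) :
  \sum_(i <- s) c = (size s)%:R * c.
Proof.
elim: s => [|i s IH]; first by rewrite big_nil mul0r.
by rewrite big_cons IH /= -addn1 natrD mulrDl mul1r addrC.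
Qed.

Lemma telescope4 (V : zmodType) (a b c d f : V) :
  a - f = (a - b) + (b - c) + (c - d) + (d - f).
Proof. by rewrite !addrA !subrK. Qed.
Lemma coef_bound (R : realType) (X : completeNormedModType R) (e : nat -> X)
  (hB : unconditional_basis e) :
  exists K : R, 0 < K /\ forall y k, `|coef hB y k| * `|e k| <= K * `|y|.
Proof.
have [K0 [K00 hK]] := approx hB.
have step : forall y, exists z, bnd hB z (K0 * `|y|) /\ `|y - z| <= `|y| / 2.
  move=> y; have [->|y0] := eqVneq y 0.
    by exists 0; rewrite subrr normr0 mulr0 mul0r; split => //; exact: bnd0.
  have ny : 0 < `|y| by rewrite normr_gt0.
  have [z [hz1 hz2]] := hK y (`|y| / 2) (divr_gt0 ny (ltr0Sn _ 1)).
  by exists z; split => //; exact: ltW.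
have [g hg] := choice step.
exists (2 * K0); split; first lra.
move=> y k.
pose fix ys m := if m is m'.+1 then ys m' - g (ys m') else y.
pose w m := y - ys m.
set C := 2 * K0 * `|y|.
have C0 : 0 <= C by rewrite mulr_ge0 // ltW // mulr_gt0.
have H1 : forall m, `|ys m| <= `|y| * pw R m.
  elim => [|m IH]; first by rewrite pw0 mulr1.
  rewrite /= pwS; apply: le_trans (proj2 (hg (ys m))) _.
  rewrite mulrA ler_pM2r //; lra.
have H2 : forall m, bnd hB (g (ys m)) (K0 * `|y| * pw R m).
  move=> m; apply: bnd_le (proj1 (hg (ys m))) _.
  by rewrite -mulrA ler_pM2l.
have wS : forall m, w m.+1 = g (ys m) + w m.
  by move=> m; rewrite /w /= opprB addrCA.
have H3 : forall l i, bnd hB (w (l + i)%N - w l) (C * (pw R l - pw R (l + i))).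
  move=> l; elim => [|i IH].
    by rewrite addn0 !subrr mulr0; exact: bnd0.
  rewrite addnS wS -addrA.
  apply: bnd_le (bndD (H2 _) IH) _.
  by rewrite pwS /C le_eqVlt; apply/orP; left; apply/eqP; field.
have H4 : forall l m, (l <= m)%N -> bnd hB (w m - w l) (C * pw R l).
  move=> l m lm; rewrite -(subnKC lm); apply: bnd_le (H3 _ _) _.
  apply: (ler_wpM2l C0); have := pw_gt0 R (l + (m - l)); lra.
have H5 : forall l m, (l <= m)%N -> bnd hB (w l - w m) (C * pw R l).
  move=> l m lm; rewrite -opprB -scaleN1r; apply: bnd_le (bndZ (-1) (H4 l m lm)) _.
  by rewrite normrN normr1 mul1r.
have Hd : forall k, exists dk, forall m, `|coef hB (w m) k - dk| * `|e k| <= C * pw R m.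
  move=> j; have ej : 0 < `|e j| by rewrite normr_gt0 e_neq0.
  have [dj hdj] : exists dj, forall m, `|coef hB (w m) j - dj| <= C * pw R m / `|e j|.
    apply: (real_limit (u := fun m => coef hB (w m) j) (b := fun m => C * pw R m / `|e j|)).
    - move=> l m lm; rewrite ler_pdivlMr // -coefB; exact: bnd_coef (H4 l m lm).
    - move=> l m lm; rewrite ler_pM2r ?invr_gt0 //; apply: (ler_wpM2l C0); exact: pw_le.
  by exists dj => m; rewrite -ler_pdivlMr //; exact: hdj.
have [d hd] := choice Hd.
have Ed : unc_expansion e d y.
  move=> eps eps0.
  set A := `|y| + 2 * C + 1.
  have A0 : 0 < A by rewrite /A; have := normr_ge0 y; lra.
  have [m hm] := pw_small (divr_gt0 eps0 (mulr_gt0 (ltr0Sn R 1) A0)).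
  have e2 : 0 < eps / 2 by rewrite divr_gt0.
  have [s0 Hs0] := coefP hB (w m) e2.
  exists s0 => s us sub.
  set L := (m + size s)%N.
  have T1 : `|y - w m| <= `|y| * pw R m by rewrite /w subKr; exact: H1.
  have T2 := Hs0 s us sub.
  have T3 : `|psum hB s (w m) - psum hB s (w L)| <= C * pw R m.
    by rewrite -psumB; apply: H5 => //; rewrite /L leq_addr.
  have T4 : `|psum hB s (w L) - \sum_(n <- s) d n *: e n| <= C * pw R m.
    rewrite /psum -sumrB.
    apply: le_trans (ler_norm_sum _ _ _) _.
    apply: (le_trans (y := \sum_(n <- s) C * pw R L)).
      by apply: ler_sum => n _; rewrite -scalerBl normrZ; exact: hd.
    rewrite sum_const_seq /L pwD.
    have -> : (size s)%:R * (C * (pw R m * pw R (size s))) = (C * pw R m) * ((size s)%:R * pw R (size s)) by ring.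
    rewrite -[leRHS]mulr1; apply: ler_wpM2l; last exact: pw_size.
    by rewrite mulr_ge0 // ltW // pw_gt0.
  have -> : y - \sum_(n <- s) d n *: e n = (y - w m) + (w m - psum hB s (w m))
     + (psum hB s (w m) - psum hB s (w L)) + (psum hB s (w L) - \sum_(n <- s) d n *: e n).
    exact: telescope4.
  apply: le_lt_trans (ler_normD _ _) _.
  apply: le_lt_trans (lerD (ler_normD _ _) (lexx _)) _.
  apply: le_lt_trans (lerD (lerD (ler_normD _ _) (lexx _)) (lexx _)) _.
  have hm2 : A * pw R m < eps / 2.
    by move: hm; rewrite ltr_pdivlMr ?mulr_gt0 // => hm; rewrite ltr_pdivlMr //; lra.
  have hA : A * pw R m = `|y| * pw R m + 2 * (C * pw R m) + pw R m by rewrite /A; ring.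
  have := pw_gt0 R m; rewrite /psum in T2 T3 T4 *; lra.
have dE := coefE hB Ed.
have := hd k 0%N; rewrite /w subrr coef0 sub0r normrN pw0 mulr1 -dE.
by move=> h; exact: h.
Qed.
Lemma coef_lip (R : realType) (X : completeNormedModType R) (e : nat -> X)
  (hB : unconditional_basis e) :
  exists K : R, 0 < K /\ forall x y k, `|coef hB x k - coef hB y k| * `|e k| <= K * `|x - y|.
Proof.
have [K [K0 hK]] := coef_bound hB.
by exists K; split => // x y k; rewrite -coefB.
Qed.

Definition MP (R : realType) (X : normedModType R) (e : nat -> X)
  (hB : unconditional_basis e) (P : nat -> bool) : set X :=
  [set x | forall k, P k -> coef hB x k = 0].

Lemma MP_closed (R : realType) (X : completeNormedModType R) (e : nat -> X)
  (hB : unconditional_basis e) P : closed (MP hB P).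
Proof.
have [K [K0 hK]] := coef_lip hB.
move=> x hx k Pk; apply: contrapT => /eqP ck.
have ek : 0 < `|e k| by rewrite normr_gt0 e_neq0.
have cp : 0 < `|coef hB x k| by rewrite normr_gt0.
have d0 : 0 < `|coef hB x k| * `|e k| / K by rewrite divr_gt0 // mulr_gt0.
have [x' [Mx' bx']] := hx _ (nbhsx_ballx _ _ d0).
move: bx'; rewrite -ball_normE /ball_ => bx'.
have := hK x x' k; rewrite (Mx' k Pk) subr0.
move: bx'; rewrite /= ltr_pdivlMr // => bx' h.
have : K * `|x - x'| < `|coef hB x k| * `|e k| by rewrite mulrC.
by rewrite ltNge h.
Qed.

Lemma MP_ideal (R : realType) (X : normedModType R) (e : nat -> X)
  (hB : unconditional_basis e) P : is_ideal e (MP hB P).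
Proof.
split.
- by move=> k _; rewrite coef0.
- by move=> x y hx hy k Pk; rewrite coefD hx ?hy ?addr0.
- by move=> c x hx k Pk; rewrite coefZ hx ?mulr0.
- move=> x y c d hc hd hcd hy k Pk.
  rewrite (coefE hB hc); apply/eqP; rewrite -normr_le0.
  by have := hcd k; rewrite -(coefE hB hd) hy // normr0.
Qed.

Lemma ideal_e (R : realType) (X : normedModType R) (e : nat -> X)
  (hB : unconditional_basis e) M x k :
  is_ideal e M -> M x -> coef hB x k != 0 -> M (e k).
Proof.
move=> [_ _ hZ hO] Mx ck.
apply: (hO _ _ _ _ (exp_delta e k) (coefP hB ((coef hB x k)^-1 *: x))).
  move=> n; rewrite coefZ; case: eqP => [->|_]; last by rewrite normr0.
  by rewrite mulVf // normr1.
exact: hZ.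
Qed.

Lemma M_psum (R : realType) (X : normedModType R) (e : nat -> X) M (s : seq nat) (c : nat -> R) :
  is_ideal e M -> (forall k, M (e k)) -> M (\sum_(n <- s) c n *: e n).
Proof.
move=> [h0 hD hZ _] he; elim: s => [|i s IH]; first by rewrite big_nil.
by rewrite big_cons; apply: hD => //; apply: hZ.
Qed.
Lemma MP_inv (R : realType) (X : completeNormedModType R) (e : nat -> X)
  (hB : unconditional_basis e) (T : {linear X -> X}) (a : nat -> nat -> R) (P : nat -> bool) :
  continuous T ->
  (forall m : nat, unc_expansion e (fun n => a n m) (T (e m))) ->
  (forall j k, P j -> ~~ P k -> a j k = 0) ->
  forall x, MP hB P x -> MP hB P (T x).
Proof.
move=> hT hA hP x Mx j Pj.
have [K [K0 hK]] := coef_lip hB.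
have ej : 0 < `|e j| by rewrite normr_gt0 e_neq0.
apply/eqP; rewrite -normr_le0 -(pmulr_rle0 _ ej) mulrC.
apply/ler_addgt0Pr => eps eps0; rewrite add0r.
have eK : 0 < eps / K by rewrite divr_gt0.
have := (@cvgrPdist_lt _ _ _ (nbhs x) _ T (T x)).1 (hT x) _ eK.
move=> Hn; have [r r0 hr] := (nbhs_ballP _ _).1 (Hn _).
have [s0 Hs0] := coefP hB x r0.
set s := undup s0.
have sub : {subset s0 <= s} by move=> z; rewrite mem_undup.
have := Hs0 s (undup_uniq _) sub.
rewrite -/(psum hB s x) => hx.
have hb : `|T x - T (psum hB s x)| < eps / K.
  by apply: hr; rewrite /= -ball_normE /ball_.
have c0 : coef hB (T (psum hB s x)) j = 0.
  rewrite /psum linear_sum coef_sum big1 // => n _.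
  rewrite linearZ coefZ (coefE hB (hA n)).
  by case: (boolP (P n)) => Pn; [rewrite Mx // mul0r | rewrite hP // mulr0].
have := hK (T x) (T (psum hB s x)) j; rewrite c0 subr0 => h.
apply: le_trans h _; rewrite -ler_pdivlMl //; apply: ltW; by rewrite mulrC.
Qed.
Lemma nontrivial_exists (R : realType) (X : completeNormedModType R)
  (e : nat -> X) (hB : unconditional_basis e) (T : {linear X -> X}) (a : nat -> nat -> R)
  (P : nat -> bool) i j :
  continuous T ->
  (forall m : nat, unc_expansion e (fun n => a n m) (T (e m))) ->
  (forall j k, P j -> ~~ P k -> a j k = 0) -> ~~ P i -> P j ->
  exists M : set X,
       [/\ is_ideal e M, closed M, (forall x, M x -> M (T x)),
           M <> [set 0] & M <> setT].
Proof.
move=> hT hA hP Pi Pj; exists (MP hB P); split.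
- exact: MP_ideal.
- exact: MP_closed.
- exact: MP_inv hT hA hP.
- move=> E; have : MP hB P (e i).
    by move=> k Pk; rewrite coef_e; case: eqP => // ki; rewrite -ki Pk in Pi.
  by rewrite E => /eqP; rewrite (negbTE (e_neq0 hB i)).
- move=> E; have : MP hB P (e j) by rewrite E.
  by move=> /(_ j Pj); rewrite coef_e eqxx => /eqP; rewrite oner_eq0.
Qed.

Lemma all_in (R : realType) (X : completeNormedModType R)
  (e : nat -> X) (hB : unconditional_basis e) (T : {linear X -> X}) (a : nat -> nat -> R) M :
  (forall m : nat, unc_expansion e (fun n => a n m) (T (e m))) ->
  (forall n : nat, a n.+1 n != 0 /\ a n n.+1 != 0) ->
  is_ideal e M -> closed M -> (forall x, M x -> M (T x)) -> M <> [set 0] -> M = setT.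
Proof.
move=> hA ha hM hC hT M0.
have [x [Mx x0]] : exists x, M x /\ x != 0.
  apply: contrapT => H; apply: M0; apply: funext => x; apply: propext; split.
    by move=> Mx; apply/eqP; apply: contrapT => /negP x0; apply: H; exists x.
  by move=> /= ->; case: hM.
have [k ck] : exists k, coef hB x k != 0.
  apply: contrapT => H; move/eqP: x0; apply.
  apply: (@coef_inj R X e hB x 0) => n.
  rewrite coef0; apply/eqP; apply: contrapT => /negP h.
  by apply: H; exists n.
have Mk := ideal_e hM Mx ck.
have up : forall i, M (e i) -> M (e i.+1).
  move=> i Mi; apply: (ideal_e (x := T (e i)) hM); first exact: hT.
  by rewrite (coefE hB (hA i)); case: (ha i).
have down : forall i, M (e i.+1) -> M (e i).
  move=> i Mi; apply: (ideal_e (x := T (e i.+1)) hM); first exact: hT.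
  by rewrite (coefE hB (hA i.+1)); case: (ha i).
have M0e : M (e 0%N).
  suff : forall i, M (e (k - i)%N) by move/(_ k); rewrite subnn.
  elim => [|i IH]; first by rewrite subn0.
  rewrite subnS; case E: (k - i)%N IH => [|p] //=; exact: down.
have Mall : forall j, M (e j) by elim => // j IH; exact: up.
apply: funext => z; apply: propext; split => // _.
apply: hC => B /nbhs_ballP[r r0 hr].
have [s0 Hs0] := coefP hB z r0.
have sub : {subset s0 <= undup s0} by move=> w; rewrite mem_undup.
exists (\sum_(n <- undup s0) coef hB z n *: e n); split.
  exact: M_psum.
by apply: hr; rewrite -ball_normE /ball_; apply: Hs0 => //; exact: undup_uniq.
Qed.

Unset Implicit Arguments. Set Strict Implicit.

Theorem corollary4p4 (R : realType) (X : completeNormedModType R)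
  (e : nat -> X) (T : {linear X -> X}) (a : nat -> nat -> R) :
  unconditional_basis e ->
  continuous T ->
  (* a is the matrix of T w.r.t. e : T e_m = sum_n a n m e_n *)
  (forall m : nat, unc_expansion e (fun n => a n m) (T (e m))) ->
  (* T is positive *)
  (forall n m : nat, 0 <= a n m) ->
  (* the matrix is tridiagonal *)
  (forall n m : nat, (n.+1 < m)%N \/ (m.+1 < n)%N -> a n m = 0) ->
  ((~ exists M : set X,
       [/\ is_ideal e M, closed M, (forall x, M x -> M (T x)),
           M <> [set 0] & M <> setT])
   <-> (forall n : nat, a n.+1 n != 0 /\ a n n.+1 != 0)).
Proof.
move=> hB hT hA _ htri; split.
- move=> H n; split; apply/eqP => h0; apply: H.
  + apply: (nontrivial_exists hB (P := fun k => (n < k)%N) (i := 0%N) (j := n.+1)) hT hA _ _ _ => //.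
    move=> j k /= nj; rewrite -leqNgt => kn.
    have [jk|jk] := ltnP k.+1 j; first by apply: htri; right.
    have -> : j = n.+1 by apply/eqP; rewrite eqn_leq nj andbT; apply: leq_trans jk _.
    have -> : k = n by apply/eqP; rewrite eqn_leq kn /=; rewrite -ltnS; apply: leq_trans nj jk.
    exact: h0.
  + apply: (nontrivial_exists hB (P := fun k => (k <= n)%N) (i := n.+1) (j := 0%N)) hT hA _ _ _ => //.
      move=> j k /= jn; rewrite -ltnNge => nk.
      have [jk|jk] := ltnP j.+1 k; first by apply: htri; left.
      have -> : k = n.+1 by apply/eqP; rewrite eqn_leq nk andbT; apply: leq_trans jk _.
      have -> : j = n by apply/eqP; rewrite eqn_leq jn /=; rewrite -ltnS; apply: leq_trans nk jk.
      exact: h0.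
    by rewrite /= -ltnNge.
- move=> ha [M [hM hC hTM M0 MT]].
  by apply: MT; exact: (all_in hB hA ha hM hC hTM M0).
Qed.
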